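(* Let $p,q\in\mathbb C$ with $p\neq0$, and for $\ell\in\frac12\mathbb N_0$ and $m\in\{-\ell,-\ell+1,\dots,\ell\}$ let $\Delta(\ell)_m:=-m^2+|q|^2-|p|^2-2im\,\mathrm{Re}(q)$, and $\langle\ell\rangle:=\sqrt{1+\ell(\ell+1)}$. Then $\Delta(\ell)_m\neq0$ for all $\ell\in\frac12\mathbb N_0$ and all $m\in\{-\ell,\dots,\ell\}$ if and only if one of the following holds: 1. $|p|>|q|$; 2. $|p|<|q|$ and $\mathrm{Re}(q)\neq0$; 3. there exists $M>0$ such that for all $\ell\in\frac12\mathbb N_0$ with $\langle\ell\rangle\ge M$ one has $\big|m^2-(|q|^2-|p|^2)\big|\ge\langle\ell\rangle^{-M}$ for all $m\in\{-\ell,\dots,\ell\}$.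
   Context: Here $m$ ranges over $-\ell\le m\le\ell$ with $\ell-m\in\mathbb N_0$; these quantities arise for the operator $Pu=\partial_0u-qu-p\bar u$ on $\mathrm{SU}(2)$, with $\langle\ell\rangle$ the eigenvalue of $(I-\mathcal L)^{1/2}$ on the matrix entries of the representation $\mathsf t^\ell$. *)

(* Defs.v *)
From Stdlib Require Import Reals.
From Coquelicot Require Import Coquelicot.
Open Scope R_scope.

Definition ell_of (n : nat) : R := INR n / 2.

(* m ranges over {-ell, -ell+1, ..., ell}, i.e. ell - m in N_0 and -ell <= m. *)
Definition in_range (n : nat) (m : R) : Prop :=
  exists k : nat, (k <= n)%nat /\ m = ell_of n - INR k.

Definition bracket (n : nat) : R :=
  sqrt (1 + ell_of n * (ell_of n + 1)).

Definition Delta_lm (p q : C) (m : R) : C :=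
  Cminus (RtoC (- m ^ 2 + Cmod q ^ 2 - Cmod p ^ 2))
         (Cmult Ci (RtoC (2 * m * Re q))).

(* Main.v *)
Require Import Defs.
From Stdlib Require Import Reals Lra Lia Arith.
From Coquelicot Require Import Coquelicot.
Open Scope R_scope.

Lemma Delta_zero (p q : C) (m : R) :
  Delta_lm p q m = RtoC 0 <->
  (m ^ 2 = Cmod q ^ 2 - Cmod p ^ 2 /\ m * Re q = 0).
Proof.
  unfold Delta_lm, Cminus, Cplus, Copp, Cmult, Ci, RtoC; simpl.
  split.
  - intro H. injection H as H1 H2. split; nra.
  - intros [H1 H2]. f_equal; nra.
Qed.

Lemma range_sq (n : nat) (m : R) : in_range n m ->
  exists j : nat, m ^ 2 = INR j ^ 2 / 4.
Proof.
  intros [k [Hk ->]]. unfold ell_of.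
  destruct (le_lt_dec (2 * k) n) as [H|H].
  - exists (n - 2 * k)%nat. rewrite minus_INR by lia. rewrite mult_INR. simpl. field.
  - exists (2 * k - n)%nat. rewrite minus_INR by lia. rewrite mult_INR. simpl. field.
Qed.

Lemma range_half (j : nat) : in_range j (INR j / 2).
Proof. exists 0%nat. split; [lia|]. unfold ell_of. simpl. ring. Qed.

Lemma range_shift (n t : nat) (m : R) : in_range n m -> in_range (n + 2 * t) m.
Proof.
  intros [k [Hk ->]]. exists (k + t)%nat. split; [lia|].
  unfold ell_of. rewrite !plus_INR, mult_INR. simpl. field.
Qed.

Theorem proposition5p2 (p q : C) (hp : p <> RtoC 0) :
  (forall (n : nat) (m : R), in_range n m -> Delta_lm p q m <> RtoC 0)
  <->
  (Cmod p > Cmod q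
   \/ (Cmod p < Cmod q /\ Re q <> 0)
   \/ (exists M : R, M > 0 /\
         forall n : nat, bracket n >= M ->
           forall m : R, in_range n m ->
             Rabs (m ^ 2 - (Cmod q ^ 2 - Cmod p ^ 2)) >= Rpower (bracket n) (- M))).
Proof.
  assert (Hp0 := Cmod_ge_0 p). assert (Hq0 := Cmod_ge_0 q).
  set (D := Cmod q ^ 2 - Cmod p ^ 2).
  split.
  - intro H.
    destruct (Rlt_dec (Cmod q) (Cmod p)) as [H1|H1]; [left; lra|].
    destruct (Req_dec (Cmod p) (Cmod q)) as [H2|H2].
    { exfalso. apply (H 0%nat 0). exists 0%nat. split; [lia|]. unfold ell_of; simpl; lra.
      apply Delta_zero. split; [unfold D; rewrite H2; ring | ring]. }
    destruct (Req_dec (Re q) 0) as [H3|H3]; [|right; left; lra].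
    right; right.
    assert (HD : D > 0) by (unfold D; nra).
    assert (Hne : forall j : nat, INR j ^ 2 / 4 <> D).
    { intros j E. apply (H j (INR j / 2) (range_half j)). apply Delta_zero.
      split; [fold D; rewrite <- E; field | rewrite H3; ring]. }
    assert (Hs : 0 <= 2 * sqrt D) by (assert (0 < sqrt D) by (apply sqrt_lt_R0; lra); lra).
    destruct (nfloor_ex _ Hs) as [j0 [Hj1 Hj2]].
    assert (Hsq := sqrt_sqrt D ltac:(lra)).
    assert (Hsp : 0 < sqrt D) by (apply sqrt_lt_R0; lra).
    assert (Hj0 := pos_INR j0).
    assert (E1 : INR j0 ^ 2 <= 4 * D) by nra.
    assert (E2 : 4 * D < (INR j0 + 1) ^ 2) by nra.
    assert (Hn0 := Hne j0).
    set (d1 := D - INR j0 ^ 2 / 4). set (d2 := (INR j0 + 1) ^ 2 / 4 - D).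
    assert (Hd1 : d1 > 0) by (unfold d1; assert (INR j0 ^ 2 / 4 <> D) by auto; lra).
    assert (Hd2 : d2 > 0) by (unfold d2; lra).
    set (d := Rmin d1 d2).
    assert (Hd : d > 0) by (unfold d; apply Rmin_glb_lt; lra).
    assert (Hall : forall j : nat, Rabs (INR j ^ 2 / 4 - D) >= d).
    { intro j. destruct (le_lt_dec j j0) as [Hl|Hl].
      - apply le_INR in Hl. assert (Hj := pos_INR j).
        assert (INR j ^ 2 <= INR j0 ^ 2) by nra.
        rewrite Rabs_left1 by lra.
        assert (d <= d1) by apply Rmin_l. unfold d1 in *. lra.
      - assert (Hl2 : (S j0 <= j)%nat) by lia. apply le_INR in Hl2. rewrite S_INR in Hl2. assert (Hj := pos_INR j).
        assert (INR j ^ 2 >= (INR j0 + 1) ^ 2) by nra.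
        rewrite Rabs_right by lra.
        assert (d <= d2) by apply Rmin_r. unfold d2 in *. lra. }
    exists (Rmax 1 (1 / d)). split.
    { assert (1 <= Rmax 1 (1/d)) by apply Rmax_l. lra. }
    intros n Hb m Hm.
    destruct (range_sq n m Hm) as [j Hj]. rewrite Hj. fold D.
    apply Rle_ge. apply Rle_trans with d; [|apply Rge_le, Hall].
    set (M := Rmax 1 (1 / d)) in *.
    assert (HM1 : 1 <= M) by apply Rmax_l.
    assert (HM2 : 1 / d <= M) by apply Rmax_r.
    apply Rle_trans with (Rpower (bracket n) (- (1))).
    { apply Rle_Rpower; lra. }
    rewrite Rpower_Ropp, Rpower_1 by lra.
    apply Rle_trans with (/ M).
    { apply Rinv_le_contravar; lra. }
    replace d with (/ (1 / d)) by (field; lra).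
    apply Rinv_le_contravar; [unfold Rdiv; rewrite Rmult_1_l; apply Rinv_0_lt_compat; lra | lra].
  - intros H n m Hm HDz. apply Delta_zero in HDz. destruct HDz as [E1 E2]. fold D in E1.
    destruct H as [H|[H|[M [HM H]]]].
    + assert (0 <= m ^ 2) by apply pow2_ge_0. unfold D in E1. nra.
    + destruct H as [H H']. apply H'.
      assert (m <> 0) by (intro Z; subst m; unfold D in E1; nra).
      apply (Rmult_eq_reg_l m); [lra | auto].
    + destruct (nfloor_ex M ltac:(lra)) as [t0 [Ht1 Ht2]].
      set (t := S t0). assert (Ht : INR t >= M) by (unfold t; rewrite S_INR; lra).
      assert (Hm' := range_shift n t m Hm).
      assert (Hb : bracket (n + 2 * t) >= M).
      { unfold bracket, ell_of. rewrite plus_INR, mult_INR. change (INR 2) with 2.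
        assert (Hn := pos_INR n).
        set (l := (INR n + 2 * INR t) / 2).
        assert (Hl : l >= M) by (unfold l; lra).
        apply Rle_ge. apply Rle_trans with l; [lra|].
        rewrite <- (sqrt_pow2 l) at 1 by lra. apply sqrt_le_1_alt. nra. }
      specialize (H _ Hb m Hm'). rewrite E1 in H.
      replace (D - D) with 0 in H by ring. rewrite Rabs_R0 in H.
      unfold Rpower in H. assert (Hexp := exp_pos (- M * ln (bracket (n + 2 * t)))). lra.
Qed.
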